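(* Let $\alpha\in(0,1)$, let $p_X$ be a distribution on a finite set $\mathcal X$ and $p_{Y\mid X}$ a channel to a finite set $\mathcal Y$. Let $\tilde q^{(0)}_{X,Y}$ be an initial joint distribution on $\mathcal X\times\mathcal Y$ and for $k\ge0$ define $q_Y^{(k)}(y)=\sum_x\tilde q^{(k)}_{X,Y}(x,y)$ and $\tilde q^{(k+1)}_{X,Y}(x,y)=\bar q_X(x)\bar q_{Y\mid X}(y\mid x)$ where $$\bar q_X(x)=\frac{p_X(x)\big(\sum_yp_{Y\mid X}(y\mid x)^\alpha q^{(k)}_Y(y)^{1-\alpha}\big)^{1/\alpha}}{\sum_{x'}p_X(x')\big(\sum_yp_{Y\mid X}(y\mid x')^\alpha q^{(k)}_Y(y)^{1-\alpha}\big)^{1/\alpha}},\qquad \bar q_{Y\mid X}(y\mid x)=\frac{p_{Y\mid X}(y\mid x)^\alpha q^{(k)}_Y(y)^{1-\alpha}}{\sum_{y'}p_{Y\mid X}(y'\mid x)^\alpha q^{(k)}_Y(y')^{1-\alpha}}.$$ Then $$F_\alpha^{\mathrm{LP}}(\tilde q^{(0)}_{X,Y},q_Y^{(0)})\ge F_\alpha^{\mathrm{LP}}(\tilde q^{(1)}_{X,Y},q_Y^{(0)})\ge\cdots\ge F_\alpha^{\mathrm{LP}}(\tilde q^{(k)}_{X,Y},q_Y^{(k)})\ge F_\alpha^{\mathrm{LP}}(\tilde q^{(k+1)}_{X,Y},q_Y^{(k)})\ge\cdots\ge I_\alpha^{\mathrm{LP}}(X;Y).$$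
   Context: $\log$ is natural and $D$ is the Kullback–Leibler divergence. For a joint distribution $\tilde q_{X,Y}=\tilde q_X\tilde q_{Y\mid X}$ and a distribution $q_Y$ on $\mathcal Y$, $F_\alpha^{\mathrm{LP}}(\tilde q_{X,Y},q_Y):=\frac{\alpha}{1-\alpha}D(\tilde q_{X,Y}\|\tilde q_Xp_{Y\mid X})+D(\tilde q_X\tilde q_{Y\mid X}\|\tilde q_Xq_Y)+\frac{\alpha}{1-\alpha}D(\tilde q_X\|p_X)$. The Lapidoth–Pfister mutual information is $I_\alpha^{\mathrm{LP}}(X;Y):=\min_{q_X}\min_{q_Y}D_\alpha(p_Xp_{Y\mid X}\|q_Xq_Y)$ with $D_\alpha(p\|q):=\frac{1}{\alpha-1}\log\sum_zp(z)^\alpha q(z)^{1-\alpha}$. *)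

(* Defs.v *)
From HB Require Import structures.
From mathcomp Require Import all_boot all_order all_algebra.
From mathcomp Require Import all_classical all_reals all_analysis.
Set Implicit Arguments. Unset Strict Implicit. Unset Printing Implicit Defensive.
Import Order.TTheory GRing.Theory Num.Theory.
Local Open Scope ring_scope.
Local Open Scope classical_set_scope.

Section LP.
Variable R : realType.

Definition is_dist (T : finType) (p : T -> R) : Prop :=
  (forall t, 0 <= p t) /\ \sum_(t : T) p t = 1.

Definition is_channel (X Y : finType) (W : X -> Y -> R) : Prop :=
  forall x, is_dist (W x).

Definition kl_term (a b : R) : \bar R :=
  if a == 0 then 0%E else if b == 0 then +oo%E else (a * ln (a / b))%:E.

Definition KL (T : finType) (p q : T -> R) : \bar R :=
  (\sum_(t : T) kl_term (p t) (q t))%E.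

(* Renyi divergence D_alpha(p||q) = 1/(alpha-1) log sum p^alpha q^(1-alpha),
   written for alpha in (0,1): when the sum is 0, log 0 = -oo and the
   value is +oo. *)
Definition renyi (alpha : R) (T : finType) (p q : T -> R) : \bar R :=
  let s := \sum_(t : T) p t `^ alpha * q t `^ (1 - alpha) in
  if s == 0 then +oo%E else ((alpha - 1)^-1 * ln s)%:E.

Variables X Y : finType.

Definition margX (q : X * Y -> R) (x : X) : R := \sum_(y : Y) q (x, y).
Definition margY (q : X * Y -> R) (y : Y) : R := \sum_(x : X) q (x, y).

Definition F_LP (alpha : R) (pX : X -> R) (W : X -> Y -> R)
    (qt : X * Y -> R) (qY : Y -> R) : \bar R :=
  ((alpha / (1 - alpha))%:E * KL qt (fun z => (margX qt z.1 * W z.1 z.2)%R)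
   + KL qt (fun z => (margX qt z.1 * qY z.2)%R)
   + (alpha / (1 - alpha))%:E * KL (margX qt) pX)%E.

(* I_alpha^LP(X;Y) = min_{q_X} min_{q_Y} D_alpha(p_X p_{Y|X} || q_X q_Y),
   written as an infimum (the minimum is attained). *)
Definition I_LP (alpha : R) (pX : X -> R) (W : X -> Y -> R) : \bar R :=
  ereal_inf [set e | exists (qX : X -> R) (qY : Y -> R),
    is_dist qX /\ is_dist qY /\
    e = renyi alpha (fun z : X * Y => pX z.1 * W z.1 z.2)
                    (fun z : X * Y => qX z.1 * qY z.2)].

Definition Zx (alpha : R) (W : X -> Y -> R) (qY : Y -> R) (x : X) : R :=
  \sum_(y : Y) W x y `^ alpha * qY y `^ (1 - alpha).

Definition normX (alpha : R) (pX : X -> R) (W : X -> Y -> R) (qY : Y -> R) : R :=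
  \sum_(x' : X) pX x' * Zx alpha W qY x' `^ alpha^-1.

Definition barqX (alpha : R) (pX : X -> R) (W : X -> Y -> R) (qY : Y -> R)
    (x : X) : R :=
  pX x * Zx alpha W qY x `^ alpha^-1 / normX alpha pX W qY.

Definition barqYX (alpha : R) (W : X -> Y -> R) (qY : Y -> R) (x : X) (y : Y) : R :=
  W x y `^ alpha * qY y `^ (1 - alpha) / Zx alpha W qY x.

Definition lp_step (alpha : R) (pX : X -> R) (W : X -> Y -> R) (qY : Y -> R)
    (z : X * Y) : R :=
  barqX alpha pX W qY z.1 * barqYX alpha W qY z.1 z.2.

Fixpoint lp_iter (alpha : R) (pX : X -> R) (W : X -> Y -> R)
    (q0 : X * Y -> R) (k : nat) : X * Y -> R :=
  match k with
  | 0 => q0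
  | k'.+1 => lp_step alpha pX W (margY (lp_iter alpha pX W q0 k'))
  end.

End LP.

(* Main.v *)
Require Import Defs.
From HB Require Import structures.
From mathcomp Require Import all_boot all_order all_algebra.
From mathcomp Require Import all_classical all_reals all_analysis.
From mathcomp Require Import ring lra.
Import Order.TTheory GRing.Theory Num.Theory.
Local Open Scope ring_scope.

Section Gen.
Context {R : realType}.

Definition klr (a b : R) : R := if a == 0 then 0 else a * ln (a / b).

Lemma adde_Nny (x y : \bar R) : x != -oo%E -> y != -oo%E -> (x + y)%E != -oo%E.
Proof. by case: x => [x||] //; case: y. Qed.

Lemma kl_term_Nny (a b : R) : kl_term a b != -oo%E.
Proof. by rewrite /kl_term; case: ifP => //; case: ifP. Qed.

Lemma KL_eq (T : finType) (p q : T -> R) : KL p q =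
  if [forall t, (p t != 0) ==> (q t != 0)] then (\sum_t klr (p t) (q t))%:E
  else +oo%E.
Proof.
case: ifP => [/forallP H | /negbT].
- rewrite /KL -sumEFin; apply: eq_bigr => t _.
  rewrite /kl_term /klr; case: ifP => // /negbT pt.
  by have := implyP (H t) pt => /negbTE ->.
- rewrite negb_forall => /existsP [t]; rewrite negb_imply negbK => /andP [pt qt].
  rewrite /KL (bigD1 t) //= {1}/kl_term (negbTE pt) qt addye //.
  by apply: (big_ind (fun e => e != -oo%E)) => //; [exact: adde_Nny|move=> i _; exact: kl_term_Nny].
Qed.

Lemma ln_le_sub1 (x : R) : 0 < x -> ln x <= x - 1.
Proof.
move=> x0; have := @le_ln1Dx R (x - 1); rewrite addrCA subrr addr0; apply; lra.
Qed.

Lemma sum_if0 (T : finType) (a F : T -> R) :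
  \sum_t (if a t == 0 then 0 else F t) = \sum_(t | a t != 0) F t.
Proof. by rewrite [RHS]big_mkcond; apply: eq_bigr => t _; case: (a t == 0). Qed.

Lemma sum_supp (T : finType) (a : T -> R) :
  \sum_(t | a t != 0) a t = \sum_t a t.
Proof. by rewrite -sum_if0; apply: eq_bigr => t _; case: eqP. Qed.

Lemma pos_supp {T : finType} {a b : T -> R} :
  \sum_t a t = 1 -> (forall t, a t != 0 -> 0 < b t) ->
  0 < \sum_(t | a t != 0) b t.
Proof.
move=> s1 bp.
have [t at0] : exists t, a t != 0.
  apply/existsP; apply: contraT; rewrite negb_exists => /forallP H.
  move: s1; rewrite big1 ?(oner_neq0) //; last by move=> t _; apply/eqP; have := H t; rewrite negbK.
  by move/eqP; rewrite eq_sym oner_eq0.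
rewrite (bigD1 t) //=; apply: (lt_le_trans (bp t at0)); rewrite lerDl.
by apply: sumr_ge0 => i /andP [ai _]; apply/ltW/bp.
Qed.

Lemma sub_supp_le (T : finType) (a b : T -> R) :
  (forall t, 0 <= b t) -> \sum_(t | a t != 0) b t <= \sum_t b t.
Proof.
move=> b0; rewrite [X in _ <= X](bigID (fun t => a t != 0)) /=.
by rewrite lerDl; apply: sumr_ge0.
Qed.

Lemma gibbs {T : finType} {a b : T -> R} {B : R} :
  (forall t, 0 <= a t) -> \sum_t a t = 1 -> (forall t, a t != 0 -> 0 < b t) ->
  \sum_(t | a t != 0) b t <= B ->
  - ln B <= \sum_t (if a t == 0 then 0 else a t * (ln (a t) - ln (b t))).
Proof.
move=> a0 s1 bp sB.
set C := \sum_(t | a t != 0) b t.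
have C0 : 0 < C by exact: pos_supp.
have -> : - ln B = - ln C - (ln B - ln C) by ring.
have lnCB : ln C <= ln B by rewrite ler_ln // posrE; apply: lt_le_trans sB.
apply: le_trans (_ : - ln C <= _); first lra.
have key : forall t, a t != 0 ->
   a t * (- ln C) + a t - b t / C <= a t * (ln (a t) - ln (b t)).
  move=> t at0.
  have apos : 0 < a t by rewrite lt_def at0 a0.
  have bt := bp t at0.
  have := @ln_le_sub1 (b t / (a t * C)).
  rewrite divr_gt0 ?mulr_gt0 // => /(_ isT).
  rewrite ln_div ?posrE ?mulr_gt0 // lnM ?posrE //.
  move=> h.
  have h2 := ler_wpM2l (ltW apos) h.
  have E : a t * (b t / (a t * C) - 1) = b t / C - a t.
    by field; rewrite ?gt_eqF.
  rewrite E in h2; move: h2; rewrite !mulrDr !mulrN; lra.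
rewrite sum_if0.
apply: le_trans (ler_sum _ key).
rewrite big_split /= big_split /= -mulr_suml sum_supp s1 sumrN -mulr_suml -/C.
by rewrite mulfV ?gt_eqF // mul1r; lra.
Qed.

Lemma marg_sum (A B : finType) (f : A -> B -> R) (g : A -> R) :
  (forall a b, 0 <= f a b) ->
  \sum_a (if \sum_b f a b == 0 then 0 else (\sum_b f a b) * g a) =
  \sum_a \sum_b (if f a b == 0 then 0 else f a b * g a).
Proof.
move=> f0; apply: eq_bigr => a _.
case: eqP => [H|_].
  have := psumr_eq0P (fun b _ => f0 a b) H => H'.
  by rewrite big1 // => b _; rewrite H' // eqxx.
by rewrite mulr_suml; apply: eq_bigr => b _; case: eqP => // ->; rewrite mul0r.
Qed.

End Gen.

Section LP2.
Variables (R : realType) (X Y : finType) (alpha : R) (pX : X -> R) (W : X -> Y -> R).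
Hypotheses (ha : 0 < alpha < 1) (hp : is_dist pX) (hW : is_channel W).

Implicit Types (r : X * Y -> R).
Definition cc : R := alpha / (1 - alpha).

Definition okb (r : X * Y -> R) (qY : Y -> R) : bool :=
  [forall z, (r z != 0) ==> (margX r z.1 * W z.1 z.2 != 0)] &&
  [forall z, (r z != 0) ==> (margX r z.1 * qY z.2 != 0)] &&
  [forall x, (margX r x != 0) ==> (pX x != 0)].

Definition Freal (r : X * Y -> R) (qY : Y -> R) : R :=
  cc * \sum_z klr (r z) (margX r z.1 * W z.1 z.2)
  + \sum_z klr (r z) (margX r z.1 * qY z.2)
  + cc * \sum_x klr (margX r x) (pX x).

Lemma cc_gt0 : 0 < cc.
Proof. rewrite /cc divr_gt0 //; case/andP: ha => ? ?; lra. Qed.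

Lemma F_eq r qY : F_LP alpha pX W r qY =
  if okb r qY then (Freal r qY)%:E else +oo%E.
Proof.
have cE : (cc%:E * +oo = +oo)%E by rewrite mulry gtr0_sg ?mul1e // cc_gt0.
rewrite /F_LP !KL_eq /okb -/cc /=.
case: ifP => h1; case: ifP => h2; case: ifP => h3 //=;
  rewrite ?cE ?addye ?addey //.
Qed.


Lemma sum_pair (F : X * Y -> R) : \sum_z F z = \sum_x \sum_y F (x, y).
Proof. by rewrite pair_bigA; apply: eq_bigr => -[]. Qed.

Lemma sum_pairY (F : X * Y -> R) : \sum_z F z = \sum_y \sum_x F (x, y).
Proof. by rewrite sum_pair exchange_big. Qed.

Lemma margX_ge0 r : (forall z, 0 <= r z) -> forall x, 0 <= margX r x.
Proof. by move=> r0 x; apply: sumr_ge0 => y _. Qed.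

Lemma margY_ge0 r : (forall z, 0 <= r z) -> forall y, 0 <= margY r y.
Proof. by move=> r0 y; apply: sumr_ge0 => x _. Qed.

Lemma margX_dist r : is_dist r -> is_dist (margX r).
Proof. by case=> r0 r1; split; [exact: margX_ge0|rewrite -r1 sum_pair]. Qed.

Lemma margY_dist r : is_dist r -> is_dist (margY r).
Proof. by case=> r0 r1; split; [exact: margY_ge0|rewrite -r1 sum_pairY]. Qed.

Lemma le_margX r z : (forall z, 0 <= r z) -> r z <= margX r z.1.
Proof.
move=> r0; case: z => x y; rewrite /margX (bigD1 y) //= lerDl.
by apply: sumr_ge0.
Qed.

Lemma le_margY r z : (forall z, 0 <= r z) -> r z <= margY r z.2.
Proof.
move=> r0; case: z => x y; rewrite /margY (bigD1 x) //= lerDl.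
by apply: sumr_ge0.
Qed.

Lemma pos_of (a : R) : 0 <= a -> a != 0 -> 0 < a.
Proof. by move=> a0 an; rewrite lt_def an a0. Qed.

Definition ell (r : X * Y -> R) (qY : Y -> R) (z : X * Y) : R :=
  ln (r z) - (1 - alpha) * ln (margX r z.1) - alpha * ln (W z.1 z.2)
  - (1 - alpha) * ln (qY z.2) - alpha * ln (pX z.1).

Lemma Freal_L r qY : is_dist r -> (forall y, 0 <= qY y) -> okb r qY ->
  (1 - alpha) * Freal r qY =
  \sum_z (if r z == 0 then 0 else r z * ell r qY z).
Proof.
move=> [r0 r1] q0 /andP [/andP [/forallP o1 /forallP o2] /forallP o3].
have S3 : \sum_x klr (margX r x) (pX x) =
   \sum_z (if r z == 0 then 0 else r z * ln (margX r z.1 / pX z.1)).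
  rewrite sum_pair -(@marg_sum R _ _ (fun x y => r (x, y)) (fun x => ln (margX r x / pX x))) //.
have a1 : 0 < 1 - alpha by case/andP: ha => ? ?; lra.
have ca : (1 - alpha) * cc = alpha by rewrite /cc; field; rewrite gt_eqF.
rewrite /Freal S3 !mulrDr !(mulrA (1 - alpha) cc) ca !mulr_sumr -!big_split /=.
apply: eq_bigr => z _; rewrite /klr; case: eqP => [_|/eqP rz]; first by rewrite !mulr0 !addr0.
have rp : 0 < r z by apply: pos_of.
have h1 := implyP (o1 z) rz; have h2 := implyP (o2 z) rz.
rewrite mulf_eq0 negb_or in h1; case/andP: h1 => m1 w1.
rewrite mulf_eq0 negb_or in h2; case/andP: h2 => _ q1.
have p1 := implyP (o3 z.1) m1.
have mp : 0 < margX r z.1 by apply: pos_of => //; exact: margX_ge0.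
have wp : 0 < W z.1 z.2 by apply: pos_of => //; case: (hW z.1) => ->.
have qp : 0 < qY z.2 by apply: pos_of.
have pp : 0 < pX z.1 by apply: pos_of => //; case: hp => ->.
rewrite !ln_div ?posrE ?mulr_gt0 // !lnM ?posrE //.
rewrite /ell; ring.
Qed.


Lemma ok_facts {r qY} {z : X * Y} : is_dist r -> (forall y, 0 <= qY y) -> okb r qY ->
  r z != 0 ->
  [/\ 0 < r z, 0 < margX r z.1, 0 < W z.1 z.2, 0 < qY z.2 & 0 < pX z.1].
Proof.
move=> [r0 r1] q0 /andP [/andP [/forallP o1 /forallP o2] /forallP o3] rz.
have rp : 0 < r z by apply: pos_of.
have h1 := implyP (o1 z) rz; have h2 := implyP (o2 z) rz.
rewrite mulf_eq0 negb_or in h1; case/andP: h1 => m1 w1.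
rewrite mulf_eq0 negb_or in h2; case/andP: h2 => _ q1.
have p1 := implyP (o3 z.1) m1.
have mp : 0 < margX r z.1 by apply: pos_of => //; exact: margX_ge0.
have wp : 0 < W z.1 z.2 by apply: pos_of => //; case: (hW z.1) => ->.
have qp : 0 < qY z.2 by apply: pos_of.
have pp : 0 < pX z.1 by apply: pos_of => //; case: hp => ->.
by split.
Qed.

Lemma renyi_core {r qY} : is_dist r -> (forall y, 0 <= qY y) -> okb r qY ->
  let S := \sum_z (pX z.1 * W z.1 z.2) `^ alpha * (margX r z.1 * qY z.2) `^ (1 - alpha) in
  0 < S /\ - ln S <= (1 - alpha) * Freal r qY.
Proof.
move=> rd q0 ok S.
set b := fun z : X * Y => (pX z.1 * W z.1 z.2) `^ alpha * (margX r z.1 * qY z.2) `^ (1 - alpha).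
have bp : forall z, r z != 0 -> 0 < b z.
  move=> z rz; have [rp mp wp qp pp] := ok_facts rd q0 ok rz.
  by rewrite /b mulr_gt0 // powR_gt0 // mulr_gt0.
have sB : \sum_(z | r z != 0) b z <= S.
  by apply: sub_supp_le => z; rewrite /b mulr_ge0 // powR_ge0.
case: (rd) => r0 r1.
split; first exact: lt_le_trans (pos_supp r1 bp) sB.
rewrite Freal_L //.
apply: le_trans (gibbs r0 r1 bp sB) _.
rewrite le_eqVlt; apply/orP; left; apply/eqP/eq_bigr => z _; case: eqP => // /eqP rz.
have [rp mp wp qp pp] := ok_facts rd q0 ok rz.
rewrite /b lnM ?posrE ?powR_gt0 ?mulr_gt0 // !ln_powR !lnM ?posrE //.
by rewrite /ell; congr (_ * _); ring.
Qed.

Lemma I_le_F r qY : is_dist r -> is_dist qY ->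
  (I_LP alpha pX W <= F_LP alpha pX W r qY)%E.
Proof.
move=> rd qd; rewrite F_eq; case: ifP => ok; last by rewrite leey.
have [q0 _] := qd.
have [S0 HS] := renyi_core rd q0 ok.
apply: le_trans; first apply: ereal_inf_lbound.
  exists (margX r), qY; split; first exact: margX_dist.
  by split; first exact: qd.
rewrite /renyi /= (gt_eqF S0) lee_fin.
have a1 : 0 < 1 - alpha by case/andP: ha => ? ?; lra.
have -> : (alpha - 1)^-1 * ln (\sum_z (pX z.1 * W z.1 z.2) `^ alpha * (margX r z.1 * qY z.2) `^ (1 - alpha))
  = (- ln (\sum_z (pX z.1 * W z.1 z.2) `^ alpha * (margX r z.1 * qY z.2) `^ (1 - alpha))) / (1 - alpha).
  by field; apply/andP; split; rewrite ?subr_eq0; apply/eqP => E; move: a1; rewrite E; lra.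
by rewrite ler_pdivrMr // mulrC.
Qed.


Lemma supp_exists (T : finType) (f : T -> R) :
  \sum_t f t != 0 -> exists t, f t != 0.
Proof.
move=> H; apply/existsP; apply: contraT; rewrite negb_exists => /forallP H'.
move: H; rewrite big1 ?eqxx // => t _; apply/eqP; have := H' t; by rewrite negbK.
Qed.

Lemma a_gt0 : 0 < alpha. Proof. by case/andP: ha. Qed.
Lemma a1_gt0 : 0 < 1 - alpha. Proof. by case/andP: ha => ? ?; lra. Qed.

Lemma lower r qY : is_dist r -> (forall y, 0 <= qY y) -> okb r qY ->
  normX alpha pX W qY != 0 ->
  - alpha * ln (normX alpha pX W qY) <= (1 - alpha) * Freal r qY.
Proof.
move=> rd q0 ok Nn.
have [r0 r1] := rd.
have ok3 : forall x, margX r x != 0 -> pX x != 0.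
  by case/andP: (ok) => _ /forallP o3 x; apply/implyP.
rewrite Freal_L // sum_pair.
set u := margX r.
set d := fun x => pX x * Zx alpha W qY x `^ alpha^-1.
have pX0 : forall x, 0 <= pX x by case: hp.
have key : forall x, (if u x == 0 then 0 else alpha * (u x * (ln (u x) - ln (d x))))
   <= \sum_y (if r (x, y) == 0 then 0 else r (x, y) * ell r qY (x, y)).
  move=> x; case: (eqVneq (u x) 0) => [u0|un].
    have := psumr_eq0P (fun y _ => r0 (x, y)) u0 => H.
    by rewrite big1 // => y _; rewrite H // eqxx.
  have up : 0 < u x by apply: pos_of => //; apply: margX_ge0.
  have ppos : 0 < pX x by apply: pos_of => //; apply: ok3.
  set c := fun y => r (x, y) / u x.
  set b := fun y => W x y `^ alpha * qY y `^ (1 - alpha).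
  have c0 : forall y, 0 <= c y by move=> y; rewrite /c divr_ge0 // ltW.
  have c1 : \sum_y c y = 1 by rewrite /c -mulr_suml divff.
  have ceq : forall y, (c y == 0) = (r (x, y) == 0).
    by move=> y; rewrite /c mulf_eq0 invr_eq0 (negbTE un) orbF.
  have bp : forall y, c y != 0 -> 0 < b y.
    move=> y; rewrite ceq => ry.
    have [_ _ wp qp _] := ok_facts (z := (x, y)) rd q0 ok ry.
    by rewrite /b mulr_gt0 // powR_gt0.
  have sB : \sum_(y | c y != 0) b y <= Zx alpha W qY x.
    by apply: sub_supp_le => y; rewrite /b mulr_ge0 // powR_ge0.
  have Zp : 0 < Zx alpha W qY x := lt_le_trans (pos_supp c1 bp) sB.
  have G := gibbs c0 c1 bp sB.
  have E : \sum_y (if r (x, y) == 0 then 0 else r (x, y) * ell r qY (x, y)) =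
     u x * \sum_y (if c y == 0 then 0 else c y * (ln (c y) - ln (b y)))
     + (alpha * ln (u x) - alpha * ln (pX x)) * u x.
    rewrite mulr_sumr {3}/u /margX mulr_sumr -big_split /=.
    apply: eq_bigr => y _; rewrite ceq; case: eqP => [->|/eqP ry]; first by rewrite !mulr0 ?mul0r ?addr0.
    have [rp _ wp qp _] := ok_facts (z := (x, y)) rd q0 ok ry.
    rewrite /c /b ln_div ?posrE // lnM ?posrE ?powR_gt0 // !ln_powR /ell /= -/u.
    by field; rewrite gt_eqF.
  rewrite E.
  have Ed : ln (d x) = ln (pX x) + alpha^-1 * ln (Zx alpha W qY x).
    by rewrite /d lnM ?posrE ?powR_gt0 // ln_powR.
  have -> : alpha * (u x * (ln (u x) - ln (d x))) =
     u x * (- ln (Zx alpha W qY x)) + (alpha * ln (u x) - alpha * ln (pX x)) * u x.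
    by rewrite Ed; field; rewrite gt_eqF // a_gt0.
  by rewrite lerD2r ler_wpM2l // ltW.
apply: le_trans (ler_sum _ (fun x _ => key x)).
have ud := margX_dist r rd; have [u0 u1] := ud.
have dp : forall x, u x != 0 -> 0 < d x.
  move=> x un; have [y ry] := supp_exists _ _ un.
  have [_ _ wp qp _] := ok_facts (z := (x, y)) rd q0 ok ry.
  have ppos : 0 < pX x by apply: pos_of => //; apply: ok3.
  rewrite /d mulr_gt0 // powR_gt0 //.
  apply: lt_le_trans (_ : 0 < W x y `^ alpha * qY y `^ (1 - alpha)) _.
    by rewrite mulr_gt0 // powR_gt0.
  rewrite /Zx (bigD1 y) //= lerDl; apply: sumr_ge0 => i _.
  by rewrite mulr_ge0 // powR_ge0.
have sB : \sum_(x | u x != 0) d x <= normX alpha pX W qY.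
  by apply: sub_supp_le => x; rewrite /d mulr_ge0 // powR_ge0.
have G := gibbs u0 u1 dp sB.
have -> : \sum_x (if u x == 0 then 0 else alpha * (u x * (ln (u x) - ln (d x)))) =
   alpha * \sum_x (if u x == 0 then 0 else u x * (ln (u x) - ln (d x))).
  by rewrite mulr_sumr; apply: eq_bigr => x _; case: ifP; rewrite ?mulr0.
by rewrite mulNr -mulrN ler_wpM2l // ltW // a_gt0.
Qed.


Section Step.
Variable qY : Y -> R.
Hypothesis q0 : forall y, 0 <= qY y.
Hypothesis Nn : normX alpha pX W qY != 0.
Let s := lp_step alpha pX W qY.
Let Z := Zx alpha W qY.
Let N := normX alpha pX W qY.

Lemma Z_ge0 x : 0 <= Z x.
Proof. by apply: sumr_ge0 => y _; rewrite mulr_ge0 // powR_ge0. Qed.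

Lemma N_gt0 : 0 < N.
Proof.
apply: pos_of => //; apply: sumr_ge0 => x _; rewrite mulr_ge0 ?powR_ge0 //.
by case: hp.
Qed.

Lemma ainv_neq0 : alpha^-1 != 0.
Proof. by rewrite invr_eq0 gt_eqF // a_gt0. Qed.

Lemma barqX_Z0 x : Z x = 0 -> barqX alpha pX W qY x = 0.
Proof.
by move=> Z0; rewrite /barqX -/Z Z0 powR0 ?ainv_neq0 // mulr0 mul0r.
Qed.

Lemma sum_barqYX x : Z x != 0 -> \sum_y barqYX alpha W qY x y = 1.
Proof. by move=> Zn; rewrite /barqYX -mulr_suml divff. Qed.

Lemma margX_step x : margX s x = barqX alpha pX W qY x.
Proof.
rewrite /margX /s /lp_step /= -mulr_sumr.
case: (eqVneq (Z x) 0) => [Z0|Zn]; first by rewrite barqX_Z0 // mul0r.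
by rewrite sum_barqYX // mulr1.
Qed.

Lemma step_ge0 z : 0 <= s z.
Proof.
rewrite /s /lp_step /barqX /barqYX mulr_ge0 // ?divr_ge0 ?mulr_ge0 ?powR_ge0 ?Z_ge0 //.
  by case: hp.
exact: ltW N_gt0.
Qed.

Lemma step_dist : is_dist s.
Proof.
split; first exact: step_ge0.
rewrite sum_pair; under eq_bigr => x _ do rewrite -/(margX s x) margX_step.
by rewrite /barqX -mulr_suml divff.
Qed.

Lemma step_nz z : s z != 0 ->
  [/\ 0 < pX z.1, 0 < Z z.1, 0 < W z.1 z.2 & 0 < qY z.2].
Proof.
rewrite /s /lp_step /barqX /barqYX !mulf_eq0 !negb_or !invr_eq0 !powR_eq0 !negb_and !negbK.
case/andP => /andP [/andP [p1 z1] _] /andP [/andP [w1 q1] _].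
have a0 : alpha != 0 by rewrite gt_eqF // a_gt0.
have a1 : 1 - alpha != 0 by rewrite gt_eqF // a1_gt0.
have ai := ainv_neq0.
rewrite (negbTE a0) (negbTE a1) (negbTE ai) !orbF in p1 z1 w1 q1 *.
split; apply: pos_of => //; first by case: hp.
  exact: Z_ge0.
by case: (hW z.1).
Qed.

Lemma step_ok : okb s qY.
Proof.
apply/andP; split; first (apply/andP; split); apply/forallP.
- move=> z; apply/implyP => sz; have [pp zp wp qp] := step_nz z sz.
  rewrite margX_step mulf_neq0 ?gt_eqF //.
  rewrite /barqX divr_gt0 ?N_gt0 // mulr_gt0 // powR_gt0 //.
- move=> z; apply/implyP => sz; have [pp zp wp qp] := step_nz z sz.
  rewrite margX_step mulf_neq0 ?gt_eqF //.
  rewrite /barqX divr_gt0 ?N_gt0 // mulr_gt0 // powR_gt0 //.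
- move=> x; apply/implyP; rewrite margX_step /barqX !mulf_eq0 !negb_or.
  by case/andP => /andP [].
Qed.

Lemma step_val : (1 - alpha) * Freal s qY = - alpha * ln N.
Proof.
rewrite Freal_L //; last exact: step_ok; last exact: step_dist.
have -> : \sum_z (if s z == 0 then 0 else s z * ell s qY z) =
   \sum_z s z * (- alpha * ln N).
  apply: eq_bigr => z _; case: eqP => [->|/eqP sz]; first by rewrite mul0r.
  have [pp zp wp qp] := step_nz z sz.
  have bX : 0 < barqX alpha pX W qY z.1.
    by rewrite /barqX divr_gt0 ?N_gt0 // mulr_gt0 // powR_gt0.
  have bY : 0 < barqYX alpha W qY z.1 z.2.
    by rewrite /barqYX divr_gt0 // mulr_gt0 // powR_gt0.
  congr (_ * _); rewrite /ell margX_step /s /lp_step.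
  rewrite lnM ?posrE //.
  rewrite /barqX /barqYX -/Z -/N !ln_div ?posrE ?mulr_gt0 ?powR_gt0 ?N_gt0 //.
  rewrite !lnM ?posrE ?powR_gt0 // !ln_powR.
  by field; rewrite gt_eqF // a_gt0.
by rewrite -mulr_suml; case: step_dist => _ ->; rewrite mul1r.
Qed.

End Step.

Lemma claim2 r qY : is_dist r -> is_dist qY -> okb r qY ->
  okb r (margY r) /\ Freal r (margY r) <= Freal r qY.
Proof.
move=> rd qd ok; have [r0 r1] := rd; have [q0 q1] := qd.
have ok' : okb r (margY r).
  have /andP [/andP [h1 h2] h3] := ok.
  rewrite /okb h1 h3 andbT /=.
  apply/forallP => z; apply/implyP => rz.
  have rp : 0 < r z by apply: pos_of.
  rewrite mulf_neq0 // gt_eqF //; apply: lt_le_trans rp _.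
    exact: le_margX.
  exact: le_margY.
split => //.
rewrite /Freal lerD2r lerD2l -subr_ge0 -sumrB.
set sY := margY r.
have -> : \sum_z (klr (r z) (margX r z.1 * qY z.2) - klr (r z) (margX r z.1 * sY z.2))
   = \sum_z (if r z == 0 then 0 else r z * (ln (sY z.2) - ln (qY z.2))).
  apply: eq_bigr => z _; rewrite /klr; case: eqP => [_|/eqP rz]; first by rewrite subrr.
  have [rp mp _ qp _] := ok_facts rd q0 ok rz.
  have sp : 0 < sY z.2 by apply: lt_le_trans rp _; exact: le_margY.
  rewrite !ln_div ?posrE ?mulr_gt0 // !lnM ?posrE //; ring.
rewrite sum_pairY -(@marg_sum R _ _ (fun y x => r (x, y)) (fun y => ln (sY y) - ln (qY y))) //.
have sd := margY_dist r rd; have [s0 s1] := sd.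
have qp : forall y, sY y != 0 -> 0 < qY y.
  move=> y sn; have [x rx] := supp_exists _ _ sn.
  by have [_ _ _ qp _] := ok_facts (z := (x, y)) rd q0 ok rx.
have sB : \sum_(y | sY y != 0) qY y <= 1 by rewrite -q1; apply: sub_supp_le.
have G := gibbs s0 s1 qp sB.
by rewrite ln1 oppr0 in G.
Qed.


Lemma main_k (q0 : X * Y -> R) : is_dist q0 ->
  (forall k : nat, normX alpha pX W (margY (lp_iter alpha pX W q0 k)) != 0) ->
  forall k : nat,
    let qk := lp_iter alpha pX W q0 k in
    let qk1 := lp_iter alpha pX W q0 k.+1 in
    (F_LP alpha pX W qk (margY qk) >= F_LP alpha pX W qk1 (margY qk))%E /\
    (F_LP alpha pX W qk1 (margY qk) >= F_LP alpha pX W qk1 (margY qk1))%E /\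
    (F_LP alpha pX W qk (margY qk) >= I_LP alpha pX W)%E /\
    (F_LP alpha pX W qk1 (margY qk) >= I_LP alpha pX W)%E.
Proof.
move=> hq hN.
have distk : forall k, is_dist (lp_iter alpha pX W q0 k).
  elim=> [|n IH] //=; exact: step_dist (hN n).
move=> k qk qk1.
have dk : is_dist qk := distk k.
have dk1 : is_dist qk1 := distk k.+1.
have qd : is_dist (margY qk) := margY_dist qk dk.
have [q0' _] := qd.
have e1 : qk1 = lp_step alpha pX W (margY qk) by [].
have okS : okb qk1 (margY qk) by rewrite e1; apply: step_ok => //; exact: hN.
split; [|split; [|split]].
- rewrite !F_eq okS; case: ifP => okk; last by rewrite leey.
  rewrite lee_fin -(ler_pM2l a1_gt0) e1 step_val //; last exact: hN.
  by apply: lower => //; exact: hN.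
- have [okq le] := claim2 qk1 (margY qk) dk1 qd okS.
  by rewrite !F_eq okS okq lee_fin.
- exact: I_le_F.
- exact: I_le_F.
Qed.

End LP2.

Theorem lemma5 (R : realType) (X Y : finType) (alpha : R)
  (pX : X -> R) (W : X -> Y -> R) (q0 : X * Y -> R) :
  0 < alpha < 1 ->
  is_dist pX -> is_channel W -> is_dist q0 ->
  (* the iteration is well defined: the normalizer of bar q_X is nonzero *)
  (forall k : nat, normX alpha pX W (margY (lp_iter alpha pX W q0 k)) != 0) ->
  forall k : nat,
    let qk := lp_iter alpha pX W q0 k in
    let qk1 := lp_iter alpha pX W q0 k.+1 in
    (F_LP alpha pX W qk (margY qk) >= F_LP alpha pX W qk1 (margY qk))%E /\
    (F_LP alpha pX W qk1 (margY qk) >= F_LP alpha pX W qk1 (margY qk1))%E /\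
    (F_LP alpha pX W qk (margY qk) >= I_LP alpha pX W)%E /\
    (F_LP alpha pX W qk1 (margY qk) >= I_LP alpha pX W)%E.
Proof.
move=> ha hp hW hq hN k.
exact: (@main_k R X Y alpha pX W ha hp hW q0 hq hN k).
Qed.
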